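(* Let $T$ be a non-abelian finite simple group and let $G$ be a finite group with a normal series $1\unlhd N\unlhd M\unlhd G$ where $N$ and $G/M$ are solvable and $M/N\cong T$. Then a perfect central extension $E$ of $T$ is a section of $G$ if and only if $E$ is a section of $M$.
   Context: A perfect central extension of $T$ is a perfect group $E$ with $E/Z(E)\cong T$. A section of a group is a quotient of a subgroup. *)

(* Defs.v *)
From mathcomp Require Import all_boot all_fingroup all_solvable.
Set Implicit Arguments. Unset Strict Implicit. Unset Printing Implicit Defensive.
Local Open Scope group_scope.

Definition perfect (gT : finGroupType) (E : {set gT}) : bool := [~: E, E] == E.

Definition perfect_central_ext (eT tT : finGroupType)
    (E : {group eT}) (T : {group tT}) : Prop :=
  perfect E /\ E / 'Z(E) \isog T.

Definition section_of (gT eT : finGroupType) (E : {group eT}) (G : {group gT})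
    : Prop :=
  exists (H K : {group gT}), [/\ H \subset G, K <| H & H / K \isog E].

(* Main.v *)
Require Import Defs.
From mathcomp Require Import all_boot all_fingroup all_solvable.
Local Open Scope group_scope.

Theorem lemma1p20 (tT gT eT : finGroupType) (T : {group tT})
    (G M N : {group gT}) (E : {group eT}) :
  simple T -> ~~ abelian T ->
  N <| G -> N \subset M -> M <| G ->
  solvable N -> solvable (G / M) -> M / N \isog T ->
  perfect_central_ext E T ->
  (section_of E G <-> section_of E M).
Proof.
move=> _ _ _ _ nMG _ solGM _ [perE _]; split; last first.
  case=> H [K [sHM nKH iso]]; exists H, K; split=> //.
  exact: subset_trans sHM (normal_sub nMG).
case=> H [K [sHG nKH iso]].
have [k Gk] := derivedP _ solGM.
have EE : forall n, E^`(n) = E.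
  by elim=> // n IH; rewrite dergSn IH; apply/eqP.
set H1 := [group of H^`(k)].
have sH1H : H1 \subset H by exact: der_sub.
have nMH : H \subset 'N(M) := subset_trans sHG (normal_norm nMG).
have sH1M : H1 \subset M.
  rewrite -quotient_sub1; last exact: subset_trans sH1H nMH.
  rewrite /H1 /= quotient_der // -Gk; apply: dergS; exact: quotientS.
have nKH1 : H1 \subset 'N(K) := subset_trans sH1H (normal_norm nKH).
exists H1, (H1 :&: K)%G; split=> //.
  exact: normalGI sH1H nKH.
rewrite /= setIC; apply: isog_trans (second_isog nKH1) _.
rewrite /H1 /= quotient_der ?(normal_norm nKH) // -(EE k).
exact: isog_der.
Qed.
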